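(* Let $U\subseteq\mathbb{R}^m$ be a connected open set with coordinates $(f_1,\dots,f_m)$, and let $h_1,\dots,h_m:U\to(0,\infty)$ be differentiable functions satisfying $$\frac{\partial h_\alpha}{\partial f_\beta}=\delta_{\alpha\beta}h_\beta-h_\alpha h_\beta,\qquad \alpha,\beta\in\{1,\dots,m\}.$$ Then there exist real constants $\gamma,\sigma_1,\dots,\sigma_m$ such that, with $$\tilde F:=\log\Big(\gamma+\sum_{\alpha=1}^m e^{f_\alpha-\sigma_\alpha}\Big),$$ one has $h_\alpha=\partial\tilde F/\partial f_\alpha$ for all $\alpha=1,\dots,m$ on $U$.
   Context: $\delta_{\alpha\beta}$ denotes the Kronecker delta. The functions $h_\alpha$ play the role of generalized Gibbs weights depending on the variables $f_1,\dots,f_m$. *)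

(* Defs.v *)
From HB Require Import structures.
From mathcomp Require Import all_boot all_order all_algebra.
From mathcomp Require Import all_classical all_reals all_analysis.
Set Implicit Arguments. Unset Strict Implicit. Unset Printing Implicit Defensive.
Import Order.TTheory GRing.Theory Num.Theory.
Import numFieldNormedType.Exports.
Local Open Scope ring_scope.

Definition coord_dir {R : realType} {m : nat} (a : 'I_m) : 'rV[R]_m :=
  delta_mx 0 a.

Definition partial {R : realType} {m : nat} (a : 'I_m)
  (g : 'rV[R]_m -> R) (x : 'rV[R]_m) : R := 'D_(coord_dir a) g x.

(* Main.v *)
Require Import Defs.
From HB Require Import structures.
From mathcomp Require Import all_boot all_order all_algebra.
From mathcomp Require Import all_classical all_reals all_analysis.
From mathcomp Require Import ring.
Import Order.TTheory GRing.Theory Num.Theory.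
Import numFieldNormedType.Exports.
Local Open Scope ring_scope.
Local Open Scope classical_set_scope.
Section S.
Context {R : realType} {m : nat}.
Local Notation V := 'rV[R]_m.

Lemma dir_zero (g : V -> R) (p w : V) :
  differentiable g p -> (forall b, 'D_(coord_dir b) g p = 0) -> 'D_w g p = 0.
Proof.
move=> dg h0; rewrite deriveE // (row_sum_delta w) linear_sum big1 // => b _.
by rewrite linearZ /= -deriveE // -/(coord_dir b) h0 scaler0.
Qed.

Lemma seg_const (g : V -> R) (y z : V) (S : set V) :
  (forall t : R, 0 <= t <= 1 -> S (y + t *: (z - y))) ->
  (forall p, S p -> differentiable g p) ->
  (forall p b, S p -> 'D_(coord_dir b) g p = 0) -> g z = g y.
Proof.
move=> hS dg h0.
pose phi t := g (y + t *: (z - y)).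
have E (t : R) : (fun h : R => h^-1 *: ((phi \o shift t) (h *: 1) - phi t)) =
    (fun h : R => h^-1 *: ((g \o shift (y + t *: (z - y))) (h *: (z - y))
       - g (y + t *: (z - y)))).
  apply/funext => h /=; rewrite /phi /shift /= [h *: 1]mulr1 scalerDl.
  by rewrite addrCA.
have dphi (t : R) : 0 <= t <= 1 -> is_derive t 1 phi 0.
  move=> t01; have Sp := hS _ t01.
  apply: DeriveDef; first by rewrite /derivable E; exact/diff_derivable/dg.
  move: (@dir_zero g _ (z - y) (dg _ Sp) (fun b => h0 _ b Sp)); rewrite /derive -E.
  by [].
have der : forall x : R, x \in `]0, 1[%R -> is_derive x 1 phi ((fun=> (0:R)) x).
  move=> x; rewrite in_itv /= => /andP[x0 x1]; apply: dphi.
  by rewrite !ltW.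
have cont : {within `[(0:R), 1], continuous phi}.
  apply: continuous_in_subspaceT => x; rewrite inE /= in_itv /= => x01.
  have := dphi x x01 => -[/derivable1_diffP dx _].
  exact: differentiable_continuous.
have [c _] := MVT_segment ler01 der cont.
rewrite mul0r => /eqP; rewrite subr_eq0 /phi scale1r scale0r addr0 addrC subrK.
by move/eqP.
Qed.

Lemma loc_const (g : V -> R) (U : set V) : open U ->
  (forall p, U p -> differentiable g p) ->
  (forall p b, U p -> 'D_(coord_dir b) g p = 0) ->
  forall y, U y -> \forall z \near y, g z = g y.
Proof.
move=> oU dg h0 y Uy.
have : nbhs y U by rewrite openE in oU; exact: oU.
move=> /nbhs_ballP[e e0 be]; apply/nbhs_ballP; exists e => // z yz.
apply: (@seg_const g y z (ball y e)).
- move=> t /andP[t0 t1]; rewrite -ball_normE /= opprD addrA subrr sub0r normrN.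
  rewrite normrZ (le_lt_trans (y := `|z - y|)) //.
    by rewrite ger0_norm // ler_piMl.
  by rewrite -normrN opprB; move: yz; rewrite -ball_normE.
- by move=> p /be; exact: dg.
- by move=> p b /be; exact: h0.
Qed.

Lemma const_on (g : V -> R) (U : set V) : open U -> connected U ->
  (forall p, U p -> differentiable g p) ->
  (forall p b, U p -> 'D_(coord_dir b) g p = 0) ->
  forall x y, U x -> U y -> g y = g x.
Proof.
move=> oU cU dg h0 x y Ux Uy.
have loc := @loc_const g U oU dg h0.
pose B := [set z | U z /\ g z = g x].
have BU : B = U.
  apply: cU.
  - by exists x.
  - exists (interior [set z | g z = g x]); first exact: open_interior.
    apply/seteqP; split => z.
      move=> [Uz gz]; split => //; rewrite /interior /=.
      by apply: filterS (loc z Uz) => w /= ->.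
    by move=> [Uz /nbhs_singleton gz]; split.
  - exists (~` interior [set z | g z != g x]).
      exact/open_closedC/open_interior.
    apply/seteqP; split => z.
      move=> [Uz gz]; split => // /nbhs_singleton /=.
      by rewrite gz eqxx.
    move=> [Uz nI]; split => //.
    case: (eqVneq (g z) (g x)) => // ne; exfalso; apply: nI.
    by rewrite /interior /=; apply: filterS (loc z Uz) => w /= ->.
have [] : B y by rewrite BU.
by [].
Qed.

Lemma coord_der (x v : V) a : is_derive x v (fun y : V => y ord0 a) (v ord0 a).
Proof.
apply: DeriveDef; first exact/diff_derivable/differentiable_coord.
have := @derive_mx R V 1 m id x v (@derivable_id _ _ x v).
rewrite derive_id => /(f_equal (fun M : 'rV[R]_m => M ord0 a)); rewrite mxE => ->.
by [].
Qed.

Lemma chain (g : R -> R) (f : V -> R) x v dg :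
  differentiable f x -> is_derive (f x) 1 g dg ->
  is_derive x v (fun y => g (f y)) ('D_v f x * dg).
Proof.
move=> df dgx.
have dg' : differentiable g (f x) by apply/derivable1_diffP; case: dgx.
have dc : differentiable (g \o f) x by exact: differentiable_comp.
change (is_derive x v (g \o f) ('D_v f x * dg)).
apply: DeriveDef.
  exact: diff_derivable dc.
rewrite deriveE // diff_comp //= diff1E // derive1E derive_val.
by rewrite -deriveE.
Qed.

Lemma is_deriveV' (f : V -> R) x v df : f x != 0 -> is_derive x v f df ->
  is_derive x v (fun y => (f y)^-1) (- (f x) ^- 2 * df).
Proof.
move=> fx0 [d e]; apply: DeriveDef; first exact: derivableV.
by rewrite deriveV // e.
Qed.

Lemma is_deriveM' (f g : V -> R) x v df dg :
  is_derive x v f df -> is_derive x v g dg ->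
  is_derive x v (fun y => f y * g y) (f x * dg + g x * df).
Proof. by move=> a b; exact: is_deriveM. Qed.

Lemma expc_der (x v : V) a (s : R) :
  differentiable (fun y : V => expR (y ord0 a - s)) x /\
  is_derive x v (fun y : V => expR (y ord0 a - s)) (v ord0 a * expR (x ord0 a - s)).
Proof.
have df : differentiable (fun y : V => y ord0 a - s) x.
  apply: differentiableB; first exact: differentiable_coord.
  exact: differentiable_cst.
split.
  apply: (@differentiable_comp _ _ _ _ (fun y : V => y ord0 a - s) expR) => //.
  exact/derivable1_diffP/derivable_expR.
have := @chain expR _ x v _ df (is_derive_expR _).
suff -> : 'D_v (fun y : V => y ord0 a - s) x = v ord0 a by [].
have := @is_deriveB R V R (fun y : V => y ord0 a) (cst s) x v _ _ (coord_der x v a) (is_derive_cst s x v).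
by rewrite subr0 => -[_ <-].
Qed.

Lemma sum_der (gamma : R) (sigma : 'I_m -> R) (x v : V) :
  differentiable (fun y : V => gamma + \sum_(b < m) expR (y ord0 b - sigma b)) x /\
  is_derive x v (fun y : V => gamma + \sum_(b < m) expR (y ord0 b - sigma b))
    (\sum_(b < m) v ord0 b * expR (x ord0 b - sigma b)).
Proof.
have -> : (fun y : V => gamma + \sum_(b < m) expR (y ord0 b - sigma b)) =
   cst gamma + \sum_(b < m) (fun y : V => expR (y ord0 b - sigma b)).
  by apply/funext => y; rewrite /= fct_sumE.
split.
  apply: differentiableD; first exact: differentiable_cst.
  apply: differentiable_sum => b; exact: (expc_der x v b (sigma b)).1.
rewrite -[X in is_derive _ _ _ X]add0r.
apply: is_deriveD.
apply: is_derive_sum => b; exact: (expc_der x v b (sigma b)).2.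
Qed.

Lemma differentiableM' (f g : V -> R) x :
  differentiable f x -> differentiable g x -> differentiable (fun y => f y * g y) x.
Proof. by move=> a b; exact: differentiableM. Qed.

Lemma differentiableB' (f g : V -> R) x :
  differentiable f x -> differentiable g x -> differentiable (fun y => f y - g y) x.
Proof. by move=> a b; exact: differentiableB. Qed.

Lemma is_deriveB' (f g : V -> R) x v df dg :
  is_derive x v f df -> is_derive x v g dg ->
  is_derive x v (fun y => f y - g y) (df - dg).
Proof. by move=> a b; exact: is_deriveB. Qed.

Lemma coord_dirE (b a : 'I_m) : (coord_dir b : V) ord0 a = (a == b)%:R :> R.
Proof. by rewrite /coord_dir mxE eqxx. Qed.

Lemma sum_coord (b : 'I_m) (F : 'I_m -> R) : \sum_c (coord_dir b : V) ord0 c * F c = F b.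
Proof.
rewrite (bigD1 b) //= big1 ?addr0; first by rewrite coord_dirE eqxx mul1r.
by move=> c cb; rewrite coord_dirE (negPf cb) mul0r.
Qed.
End S.
Arguments is_deriveM' {R m f g x v df dg}.
Arguments is_deriveV' {R m f x v df}.
Arguments is_deriveB' {R m f g x v df dg}.
Arguments differentiableM' {R m f g x}.
Arguments differentiableB' {R m f g x}.
Arguments chain {R m g f x v dg}.

Theorem proposition5p1 (R : realType) (m : nat) (U : set 'rV[R]_m)
  (h : 'I_m -> 'rV[R]_m -> R) :
  open U -> connected U ->
  (forall a x, U x -> 0 < h a x) ->
  (forall a x, U x -> differentiable (h a) x) ->
  (forall a b x, U x ->
     partial b (h a) x = (a == b)%:R * h b x - h a x * h b x) ->
  exists (gamma : R) (sigma : 'I_m -> R),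
    forall x, U x ->
      0 < gamma + \sum_(b < m) expR (x ord0 b - sigma b) /\
      forall a,
        is_derive x (coord_dir a)
          (fun y : 'rV[R]_m => ln (gamma + \sum_(b < m) expR (y ord0 b - sigma b)))
          (h a x).
Proof.
move=> oU cU hpos hdiff hpar.
case: m => [|n] in U h oU cU hpos hdiff hpar *.
  exists 1, (fun _ => 0) => x Ux; split; first by rewrite big_ord0 addr0 ltr01.
  by case.
have [[x0 Ux0]|U0] := pselect (exists x, U x); last first.
  by exists 1, (fun _ => 0) => x Ux; exfalso; apply: U0; exists x.
pose a0 : 'I_n.+1 := ord0.
pose X a (y : 'rV[R]_n.+1) := expR (y ord0 a - 0).
pose u a y := h a y * (X a y)^-1.
pose c a y := u a y * (u a0 y)^-1.
have Xpos a y : 0 < X a y by exact: expR_gt0.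
have Xn0 a y : X a y != 0 by rewrite gt_eqF.
have upos a y : U y -> 0 < u a y by move=> Uy; rewrite mulr_gt0 ?invr_gt0 ?hpos.
have un0 a y : U y -> u a y != 0 by move=> Uy; rewrite gt_eqF ?upos.
have dh a b p : U p -> is_derive p (coord_dir b) (h a)
    ((a == b)%:R * h b p - h a p * h b p).
  move=> Up; apply: DeriveDef; first exact/diff_derivable/hdiff.
  exact: hpar.
have Xd a p : differentiable (X a) p := (expc_der p 0 a 0).1.
have ud a p : U p -> differentiable (u a) p.
  move=> Up; apply: differentiableM'; first exact: hdiff.
  exact: differentiableV.
have du a b p : U p -> is_derive p (coord_dir b) (u a) (- h b p * u a p).
  move=> Up.
  have := is_deriveM' (dh a b p Up) (is_deriveV' (Xn0 a p) (expc_der p (coord_dir b) a 0).2).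
  move=> H; apply: is_derive_eq H _.
  rewrite coord_dirE /u.
  have [<-|nab] := eqVneq a b; rewrite ?eqxx ?(negPf nab) /=.
    rewrite -/(X a p); move: (Xn0 a p); set t := X a p => t0.
    by field.
  rewrite -/(X a p); move: (Xn0 a p); set t := X a p => t0.
  by field.
have cd a p : U p -> differentiable (c a) p.
  move=> Up; apply: differentiableM'; first exact: ud.
  by apply: differentiableV; [exact: ud|exact: un0].
have dc a b p : U p -> is_derive p (coord_dir b) (c a) 0.
  move=> Up.
  have H := is_deriveM' (du a b p Up) (is_deriveV' (un0 a0 p Up) (du a0 b p Up)).
  apply: is_derive_eq H _.
  move: (un0 a0 p Up); set t := u a0 p => t0.
  by field.
have cc a p : U p -> c a p = c a x0.
  move=> Up; apply: (@const_on _ _ (c a) U oU cU) => //.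
  - by move=> q Uq; exact: cd.
  - by move=> q b Uq; case: (dc a b q Uq).
pose sigma a := - ln (c a x0).
have esig a : expR (- sigma a) = c a x0.
  rewrite /sigma opprK lnK //.
  by rewrite posrE mulr_gt0 ?invr_gt0 ?upos.
have key b p : U p -> expR (p ord0 b - sigma b) = h b p * (u a0 p)^-1.
  move=> Up; rewrite expRD esig -(cc b p Up) /c [u b p]/u /X subr0.
  move: (un0 a0 p Up) (Xn0 b p); rewrite /X subr0.
  set t := u a0 p; set e := expR (p ord0 b) => t0 e0.
  by field; rewrite t0 e0.
pose G0 (y : 'rV[R]_n.+1) := 0 + \sum_(b < n.+1) expR (y ord0 b - sigma b).
pose Z (y : 'rV[R]_n.+1) := (u a0 y)^-1.
pose D (y : 'rV[R]_n.+1) := Z y - G0 y.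
have Dd p : U p -> differentiable D p.
  move=> Up; apply: differentiableB'.
    by apply: differentiableV; [exact: ud|exact: un0].
  exact: (sum_der 0 sigma p (coord_dir a0)).1.
have dD b p : U p -> is_derive p (coord_dir b) D 0.
  move=> Up.
  have H := is_deriveB' (is_deriveV' (un0 a0 p Up) (du a0 b p Up))
    (sum_der 0 sigma p (coord_dir b)).2.
  apply: is_derive_eq H _.
  rewrite sum_coord key //.
  move: (un0 a0 p Up); set t := u a0 p => t0; clearbody t.
  by field; rewrite t0.
have DD p : U p -> D p = D x0.
  move=> Up; apply: (@const_on _ _ D U oU cU (fun q Uq => Dd q Uq)) => //.
  by move=> q b Uq; case: (dD b q Uq).
exists (D x0), sigma => x Ux.
have GZ : D x0 + \sum_(b < n.+1) expR (x ord0 b - sigma b) = Z x.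
  by rewrite -(DD x Ux) /D /G0 add0r subrK.
have Zpos : 0 < Z x by rewrite /Z invr_gt0 upos.
split; first by rewrite GZ.
move=> a.
have [dG iG] := sum_der (D x0) sigma x (coord_dir a).
have Gpos : 0 < (fun y : 'rV[R]_n.+1 =>
    D x0 + \sum_(b < n.+1) expR (y ord0 b - sigma b)) x by rewrite /= GZ.
have H := @chain _ _ _ _ x (coord_dir a) _ dG (is_derive1_ln Gpos).
apply: is_derive_eq H _.
case: iG => _ ->; rewrite sum_coord key // /= GZ /Z.
move: (un0 a0 x Ux); set t := u a0 x => t0; clearbody t.
by field; rewrite t0.
Qed.
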